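(* Let $A$ and $B$ be meet-semilattices such that, identifying $A$ with its image $\{{\downarrow}a : a\in A\}$ in $\mathcal{BL} A$, we have $A\subseteq B\subseteq \mathcal{BL} A$ with $A$ a sub-meet-semilattice of $B$ and $B$ a sub-meet-semilattice of $\mathcal{BL} A$. Then $\mathcal{BL} B\cong \mathcal{BL} A$.
   Context: A meet-semilattice is a poset in which all finite meets exist (so it has a top $1$ but need not have a bottom). For a meet-semilattice $A$, a subset $S\subseteq A$ whose join $\bigvee S$ exists in $A$ is called admissible (and $\bigvee S$ a distributive join) if for every $a\in A$ the join $\bigvee\{a\wedge s: s\in S\}$ exists and equals $a\wedge\bigvee S$. A downset $E$ of $A$ is a D-ideal if $\bigvee S\in E$ for every admissible $S\subseteq E$. The Bruns–Lakser completion $\mathcal{BL} A$ is the set of all D-ideals of $A$ ordered by inclusion; it is a frame, and $a\mapsto {\downarrow}a$ embeds $A$ as a join-dense sub-meet-semilattice of $\mathcal{BL} A$. *)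

(* Defs.v *)
From HB Require Import structures.
From mathcomp Require Import all_boot all_order.
Set Implicit Arguments. Unset Strict Implicit. Unset Printing Implicit Defensive.
Import Order.TTheory.
Local Open Scope order_scope.

Section Generic.
Variables (T : Type) (le : T -> T -> Prop).

Definition is_ub (S : T -> Prop) (x : T) : Prop := forall s, S s -> le s x.
Definition is_lub (S : T -> Prop) (x : T) : Prop :=
  is_ub S x /\ forall y, is_ub S y -> le x y.
Definition is_meet (a b m : T) : Prop :=
  le m a /\ le m b /\ forall y, le y a -> le y b -> le y m.

Definition admissible (S : T -> Prop) : Prop :=
  exists j, is_lub S j /\
    forall a m, is_meet a j m ->
      is_lub (fun x => exists2 s, S s & is_meet a s x) m.

Definition downset (E : T -> Prop) : Prop :=
  forall x y, le x y -> E y -> E x.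

Definition D_ideal (E : T -> Prop) : Prop :=
  downset E /\
  forall S, (forall s, S s -> E s) -> admissible S ->
    forall j, is_lub S j -> E j.

Definition BL : Type := {E : T -> Prop | D_ideal E}.
Definition BL_le (X Y : BL) : Prop :=
  forall x, proj1_sig X x -> proj1_sig Y x.

End Generic.

Definition order_iso (X Y : Type) (leX : X -> X -> Prop) (leY : Y -> Y -> Prop)
  : Prop :=
  exists (f : X -> Y) (g : Y -> X),
    cancel f g /\ cancel g f /\ forall x y, leX x y <-> leY (f x) (f y).

Definition down (d : Order.disp_t) (A : porderType d) (a : A) : A -> Prop :=
  fun x => x <= a.

(* B as an ordered type: a family Bs of subsets of A, ordered by inclusion *)
Definition subfam (A : Type) (Bs : (A -> Prop) -> Prop) : Type :=
  {E : A -> Prop | Bs E}.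
Definition subfam_le (A : Type) (Bs : (A -> Prop) -> Prop)
  (X Y : subfam Bs) : Prop :=
  forall x, proj1_sig X x -> proj1_sig Y x.

(* Main.v *)
Require Import Defs.
From HB Require Import structures.
From mathcomp Require Import all_boot all_order.
From Stdlib Require Import FunctionalExtensionality PropExtensionality ProofIrrelevance.
Set Implicit Arguments. Unset Strict Implicit. Unset Printing Implicit Defensive.
Import Order.TTheory.
Local Open Scope order_scope.

Lemma meetE d (A : meetSemilatticeType d) (a b x : A) :
  is_meet (@Order.le d A) a b x <-> x = a `&` b.
Proof.
split.
- move=> [xa [xb H]]; apply: le_anti; rewrite lexI xa xb /=.
  exact: H (leIl a b) (leIr b a).
- move=> ->; split; first exact: leIl.
  split; first exact: leIr.
  by move=> y ya yb; rewrite lexI ya yb.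
Qed.

Lemma lub_uniq d (A : porderType d) (S : A -> Prop) j j' :
  is_lub (@Order.le d A) S j -> is_lub (@Order.le d A) S j' -> j = j'.
Proof.
move=> [u l] [u' l']; apply: le_anti; rewrite (l _ u') (l' _ u) //.
Qed.

Lemma lub_ext T (le : T -> T -> Prop) (P Q : T -> Prop) m :
  (forall x, P x <-> Q x) -> is_lub le P m -> is_lub le Q m.
Proof.
move=> e [u l]; split.
- by move=> s /e; apply: u.
- by move=> y uy; apply: l => s /e; apply: uy.
Qed.

Lemma admMeet d (A : meetSemilatticeType d) (S : A -> Prop) j z :
  admissible (@Order.le d A) S -> is_lub (@Order.le d A) S j -> z <= j ->
  admissible (@Order.le d A) (fun x => exists2 s, S s & is_meet (@Order.le d A) z s x)
  /\ is_lub (@Order.le d A) (fun x => exists2 s, S s & is_meet (@Order.le d A) z s x) z.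
Proof.
move=> [j0 [lj0 dj0]] lj zj.
have ej := lub_uniq lj0 lj; subst j0.
have lubT := dj0 z z (proj2 (meetE _ _ _) (esym (elimT (meet_idPl) zj))).
split=> //; exists z; split=> // b m /meetE ->.
have bzj : b `&` z <= j by apply: le_trans (leIr _ _) zj.
have := dj0 (b `&` z) (b `&` z) (proj2 (meetE _ _ _) (esym (elimT (meet_idPl) bzj))).
apply: lub_ext => x; split.
- move=> [s Ss /meetE ->]; exists (z `&` s); first by exists s => //; apply/meetE.
  by apply/meetE; rewrite meetA.
- move=> [t [s Ss /meetE ->] /meetE ->]; exists s => //; apply/meetE; by rewrite meetA.
Qed.

Lemma sig_eq T (P : T -> Prop) (x y : sig P) : proj1_sig x = proj1_sig y -> x = y.
Proof.
case: x => x px; case: y => y py /= e; subst y; congr exist; apply: proof_irrelevance.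
Qed.

Theorem theorem3p5 (d : Order.disp_t) (A : tMeetSemilatticeType d)
  (Bs : (A -> Prop) -> Prop)
  (* B is a subset of BL A *)
  (HBL : forall E, Bs E -> D_ideal (@Order.le d A) E)
  (* A (via a |-> down a) is contained in B *)
  (HA : forall a : A, Bs (down a))
  (* B is a sub-meet-semilattice of BL A: closed under the top (= down \top)
     and binary meets (= intersections) of BL A *)
  (Htop : Bs (fun _ => True))
  (Hmeet : forall E F, Bs E -> Bs F -> Bs (fun x => E x /\ F x)) :
  @order_iso (BL (@subfam_le A Bs)) (BL (fun x y : A => (x <= y)%O))
    (@BL_le _ (@subfam_le A Bs)) (@BL_le _ (fun x y : A => (x <= y)%O)).
Proof.
pose BT := subfam Bs.
pose leB := @subfam_le A Bs.
pose leA := fun x y : A => (x <= y)%O.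
pose dB (a : A) : BT := exist _ (down a) (HA a).
have Bd : forall X : BT, forall x y, x <= y -> proj1_sig X y -> proj1_sig X x.
  by move=> X; have [Xd _] := HBL _ (proj2_sig X).
have fD : forall F : BL leB, D_ideal leA (fun a => proj1_sig F (dB a)).
  move=> [P [Pd Pc]] /=; split.
  - move=> x y xy Py; apply: (Pd _ (dB y)) => // t; rewrite /down /= => tx.
    exact: le_trans tx xy.
  - move=> S SP admS j lj.
    have [j0 [lj0 dj0]] := admS.
    have ej := lub_uniq lj0 lj; subst j0.
    pose S' := fun Y : BT => exists2 s, S s & forall y, proj1_sig Y y <-> y <= s.
    have lubS' : is_lub leB S' (dB j).
      split.
      + move=> Y [s Ss HY] y /HY ys; exact: le_trans ys (proj1 lj s Ss).
      + move=> Y ubY y yj.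
        have [Yd Yc] := HBL _ (proj2_sig Y).
        apply: Yd yj _; apply: (Yc S _ admS j lj) => s Ss.
        exact: (ubY (dB s) (ex_intro2 _ _ s Ss (fun y => iff_refl _)) s (lexx s)).
    apply: (Pc S').
    + move=> Y [s Ss HY]; apply: (Pd _ (dB s)); last exact: SP.
      by move=> y /HY.
    + exists (dB j); split => // Y m [mY [mj mgr]]; split.
      * move=> m' [s' [s Ss Hs'] [m'Y [m's' _]]]; apply: mgr => // x /m's' /Hs' xs.
        exact: le_trans xs (proj1 lj s Ss).
      * move=> Z ubZ z zm.
        have zY := mY z zm; have zj : z <= j := mj z zm.
        have [Zd Zc] := HBL _ (proj2_sig Z).
        have [admT lubT] := admMeet admS lj zj.
        apply: (Zc _ _ admT z lubT) => x [s Ss /meetE ->].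
        pose W : BT := exist _ (fun x => proj1_sig Y x /\ down s x)
                         (Hmeet _ _ (proj2_sig Y) (HA s)).
        apply: (ubZ W).
          exists (dB s); first by exists s.
          split; first by move=> t [].
          split; first by move=> t [].
          by move=> V VY Vs t Vt; split; [exact: VY | exact: Vs].
        split; first exact: Bd _ _ _ (leIl _ _) zY.
        exact: leIr.
    + exact: lubS'.
have gD : forall E : BL leA,
    D_ideal leB (fun X : BT => forall x, proj1_sig X x -> proj1_sig E x).
  move=> [P [Pd Pc]] /=; split.
  - by move=> X Y XY HY x Xx; apply: HY; apply: XY.
  - move=> S SE admS J lJ x Jx.
    have [j0 [lj0 dj0]] := admS.
    have L : forall m w, proj1_sig J m ->
        (forall x, x <= m -> (exists2 s, S s & proj1_sig s x) -> x <= w) -> m <= w.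
      move=> m w Jm H.
      have j0m : proj1_sig j0 m by apply: (proj2 lJ j0 (proj1 lj0)).
      have mm : is_meet leB (dB m) j0 (dB m).
        split; first by move=> y.
        split; first by move=> y ym; exact: (Bd _ _ _ ym j0m).
        by move=> V Vm _.
      have [_ lst] := dj0 (dB m) (dB m) mm.
      apply: (lst (dB w) _ m (lexx m)).
      move=> m' [s Ss [m'm [m's _]]] y m'y.
      apply: H; first exact: m'm y m'y.
      by exists s => //; apply: m's.
    pose T := fun y => y <= x /\ exists2 s, S s & proj1_sig s y.
    have lubT : is_lub leA T x.
      split; first by move=> y [].
      move=> w ubw; apply: L => // y yx Hs; apply: ubw; split => //.
    apply: (Pc T).
    + by move=> y [_ [s Ss sy]]; exact: (SE s Ss y sy).
    + exists x; split => // b m /meetE ->; split.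
      * move=> y [t [tx _] /meetE ->]; exact: (leI2 (lexx b) tx).
      * move=> w ubw; apply: L.
          exact: Bd _ _ _ (leIr _ _) Jx.
        move=> y yle [s Ss sy]; apply: ubw; exists y.
          split; [exact: le_trans yle (leIr _ _) | by exists s].
        apply/meetE; apply/esym/meet_idPr.
        exact: le_trans yle (leIl _ _).
    + exact: lubT.
have key3 : forall (F : BL leB) (X : BT),
    (forall x, proj1_sig X x -> proj1_sig F (dB x)) -> proj1_sig F X.
  move=> [P [Pd Pc]] X H /=.
  pose S := fun Y : BT => exists2 x, proj1_sig X x & forall y, proj1_sig Y y <-> y <= x.
  have lubX : is_lub leB S X.
    split.
    + move=> Y [x Xx HY] y /HY yx; exact: Bd _ _ _ yx Xx.
    + move=> Y ubY x Xx.
      exact: (ubY (dB x) (ex_intro2 _ _ x Xx (fun y => iff_refl _)) x (lexx x)).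
  apply: (Pc S).
  - move=> Y [x Xx HY]; apply: (Pd _ (dB x)) (H x Xx) => y /HY //.
  - exists X; split => // Y m [mY [mX mgr]]; split.
    + move=> m' [s [x Xx Hs] [m'Y [m's _]]]; apply: mgr => // y m'y.
      exact: Bd _ _ _ (proj1 (Hs y) (m's y m'y)) Xx.
    + move=> Z ubZ z zm; apply: (ubZ (dB z) _ z (lexx z)).
      exists (dB z); first by exists z; [exact: mX | by []].
      split; first by move=> y yz; exact: (Bd _ _ _ yz (mY z zm)).
      split; first by [].
      by move=> V _ Vz.
  - exact: lubX.
pose f (F : BL leB) : BL leA := exist _ _ (fD F).
pose g (E : BL leA) : BL leB := exist _ _ (gD E).
exists f, g; split; [|split].
- move=> F; apply: sig_eq => /=.
  apply: functional_extensionality => X; apply: propositional_extensionality.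
  split; first exact: key3.
  move=> FX x Xx; have [Fd _] := proj2_sig F.
  by apply: (Fd _ X) FX => y yx; exact: (Bd _ _ _ yx Xx).
- move=> E; apply: sig_eq => /=.
  apply: functional_extensionality => a; apply: propositional_extensionality.
  split; first by move=> H; exact: (H a (lexx a)).
  move=> Ea x xa; have [Ed _] := proj2_sig E; exact: Ed xa Ea.
- move=> F F'; split.
  + by move=> H a; apply: H.
  + move=> H X FX; apply: key3 => x Xx; apply: H => /=.
    have [Fd _] := proj2_sig F.
    by apply: (Fd _ X) FX => y yx; exact: (Bd _ _ _ yx Xx).
Qed.
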